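(* Consider $N$ agents with dynamics $\dot q_i=v_i$, $M_i(q_i)\dot v_i+C_i(q_i,v_i)v_i+g_i(q_i)=\tau_i$, $i=1,\dots,N$, satisfying the standing assumptions below, and a directed graph with $N$ nodes, $M$ edges and incidence matrix $B$. Let $q_d(t)\in\mathbb{R}^n$ be a smooth reference trajectory. Let $\Pi_i,K_i\in\mathbb{R}^{n\times n}$ be symmetric positive definite, and let $K_\zeta\in\mathbb{R}^{Mn\times Mn}$ be symmetric positive definite. Define $\tilde q_i=q_i-q_d$, $v_{i,r}=\dot q_d-\Pi_i\tilde q_i$, $s_i=v_i-v_{i,r}$, and apply to each agent the control law $$\tau_i=M_i(q_i)\dot v_{i,r}+C_i(q_i,\dot q_i)v_{i,r}+g_i(q_i)-K_is_i-\Pi_i\tilde q_i+u_i .$$ To each edge $k$ attach an artificial spring state $\zeta_k\in\mathbb{R}^n$ with potential $P_\zeta(\zeta)=\tfrac12(\zeta-\zeta_d)^\top K_\zeta(\zeta-\zeta_d)$, where $\zeta=(\zeta_1^\top,\dots,\zeta_M^\top)^\top$ and $\zeta_d\in\mathbb{R}^{Mn}$ is a constant vector of desired relative displacements, with edge dynamics $\dot\zeta=\mu-\frac{\partial P_\zeta}{\partial\zeta}(\zeta)$ and edge output $\frac{\partial P_\zeta}{\partial \zeta}(\zeta)=K_\zeta(\zeta-\zeta_d)$, and interconnect via $\mu=(B^\top\otimes I_n)s$, $u=-(B\otimes I_n)K_\zeta(\zeta-\zeta_d)$, where $s,u$ are the stacked vectors of $s_i,u_i$. The resulting closed-loop system is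 $$\dot{\tilde q}+\Pi\tilde q=s,\quad M(q)\dot s+C(q,\dot q)s+Ks=-\Pi\tilde q-(B\otimes I_n)K_\zeta(\zeta-\zeta_d),\quad \dot\zeta+K_\zeta(\zeta-\zeta_d)=(B^\top\otimes I_n)s,$$ with $\Pi=\mathrm{diag}(\Pi_1,\dots,\Pi_N)$, $K=\mathrm{diag}(K_1,\dots,K_N)$. Then the function $$S(\tilde q,s,\zeta,q)=\tfrac12\tilde q^\top\Pi\tilde q+\tfrac12 s^\top M(q)s+P_\zeta(\zeta)$$ satisfies, along all solutions, $\dot S=-\tilde q^\top\Pi^2\tilde q-s^\top Ks-(\zeta-\zeta_d)^\top K_\zeta^2(\zeta-\zeta_d)$ and $\dot S\le-\beta S$, with $\beta=k_3/k_2$, where $k_2=\max\{\lambda_{\max}(\Pi),\ \sup_q\lambda_{\max}(M(q)),\ \lambda_{\max}(K_\zeta)\}$ and $k_3=\min\{\lambda_{\min}(\Pi^2),\ \lambda_{\min}(K),\ \lambda_{\min}(K_\zeta^2)\}$. Consequently the equilibrium $(\tilde q,s,\zeta)=(0,0,\zeta_d)$ is globally uniformly exponentially stable, with $S(t)\le e^{-\beta t}S(0)$.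
   Context: Standing assumptions: each $q_i\in\mathbb{R}^n$; $M_i(q_i)$ is symmetric positive definite and uniformly bounded, i.e. there exist constants $0<m_1\le m_2$ with $m_1I\le M_i(q_i)\le m_2 I$ for all $q_i$; $g_i(q_i)=\frac{\partial P_i}{\partial q_i}(q_i)$ for a potential function $P_i$; $C_i(q_i,v_i)$ is a matrix satisfying $C_i(q_i,v_i)v_i=\dot M_i(q_i)v_i-\frac{\partial}{\partial q_i}\big(\tfrac12 v_i^\top M_i(q_i)v_i\big)$ and such that $\dot M_i(q_i)-2C_i(q_i,v_i)$ is skew-symmetric for all $q_i,v_i$. Stacked quantities: $q=(q_1^\top,\dots,q_N^\top)^\top$, similarly $v,\tau,s,u$; $M(q)=\mathrm{diag}(M_1(q_1),\dots,M_N(q_N))$, $C(q,v)=\mathrm{diag}(C_1,\dots,C_N)$. The incidence matrix $B\in\mathbb{R}^{N\times M}$ of a directed graph has entries $b_{ik}=-1$ if node $i$ is the tail of edge $k$, $b_{ik}=1$ if node $i$ is the head of edge $k$, and $0$ otherwise. $\otimes$ denotes the Kronecker product; $\lambda_{\min},\lambda_{\max}$ denote minimal/maximal eigenvalues. *)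

(* Defs.v *)
From mathcomp Require Import ssreflect ssrfun ssrbool eqtype ssrnat seq choice fintype bigop.
From Stdlib Require Import Reals.

Set Implicit Arguments.
Unset Strict Implicit.
Unset Printing Implicit Defensive.

Local Open Scope R_scope.

(** Vectors over a finite index type I are functions I -> R; matrices are
    functions I -> J -> R (row index first). *)

Definition rsum {I : finType} (F : I -> R) : R := \big[Rplus/R0]_(p : I) F p.

Definition dot {I : finType} (x y : I -> R) : R := rsum (fun p => x p * y p).
Definition sqnorm {I : finType} (x : I -> R) : R := dot x x.

Definition mv {I J : finType} (A : I -> J -> R) (x : J -> R) : I -> R :=
  fun p => rsum (fun r => A p r * x r).
Definition mm {I J K : finType} (A : I -> J -> R) (C : J -> K -> R) : I -> K -> R :=
  fun p r => rsum (fun j => A p j * C j r).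
Definition tr {I J : finType} (A : I -> J -> R) : J -> I -> R := fun r p => A p r.
Definition quad {I : finType} (A : I -> I -> R) (x : I -> R) : R := dot x (mv A x).
Definition vsub {I : finType} (x y : I -> R) : I -> R := fun p => x p - y p.

Definition msym {I : finType} (A : I -> I -> R) : Prop :=
  forall p r, A p r = A r p.
Definition mskew {I : finType} (A : I -> I -> R) : Prop :=
  forall p r, A p r = - A r p.
Definition nonzero {I : finType} (x : I -> R) : Prop := exists p, x p <> 0.
Definition spd {I : finType} (A : I -> I -> R) : Prop :=
  msym A /\ forall x, nonzero x -> 0 < quad A x.

Definition eigenvalue {I : finType} (A : I -> I -> R) (l : R) : Prop :=
  exists x, nonzero x /\ forall p, mv A x p = l * x p.
Definition is_lambda_max {I : finType} (A : I -> I -> R) (l : R) : Prop :=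
  eigenvalue A l /\ forall mu, eigenvalue A mu -> mu <= l.
Definition is_lambda_min {I : finType} (A : I -> I -> R) (l : R) : Prop :=
  eigenvalue A l /\ forall mu, eigenvalue A mu -> l <= mu.

(** Stacked spaces: agent space R^{Nn} indexed by 'I_N * 'I_n (agent, component),
    edge space R^{Mn} indexed by 'I_M * 'I_n (edge, component). *)
Definition blk {N n : nat} (x : 'I_N * 'I_n -> R) (i : 'I_N) : 'I_n -> R :=
  fun a => x (i, a).

Definition bdiag {N n : nat} (F : 'I_N -> 'I_n -> 'I_n -> R) :
  'I_N * 'I_n -> 'I_N * 'I_n -> R :=
  fun p r => if p.1 == r.1 then F p.1 p.2 r.2 else 0.

Definition kronI {N M : nat} (n : nat) (A : 'I_N -> 'I_M -> R) :
  'I_N * 'I_n -> 'I_M * 'I_n -> R :=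
  fun p e => A p.1 e.1 * (if p.2 == e.2 then 1 else 0).

Definition is_incidence {N M : nat} (B : 'I_N -> 'I_M -> R) : Prop :=
  exists (tail head : 'I_M -> 'I_N),
    (forall k, tail k <> head k) /\
    forall i k, B i k = if i == tail k then -1 else if i == head k then 1 else 0.

Definition upd {n : nat} (q : 'I_n -> R) (k : 'I_n) (x : R) : 'I_n -> R :=
  fun j => if j == k then x else q j.

Definition vcont_at {n : nat} (F : ('I_n -> R) -> R) (q : 'I_n -> R) : Prop :=
  forall eps, 0 < eps -> exists delta, 0 < delta /\
    forall q', (forall j, Rabs (q' j - q j) < delta) -> Rabs (F q' - F q) < eps.

Definition has_partials {n : nat} (F : ('I_n -> R) -> R)
  (dF : ('I_n -> R) -> 'I_n -> R) : Prop :=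
  forall q k, derivable_pt_lim (fun x => F (upd q k x)) (q k) (dF q k).

Definition C1_with {n : nat} (F : ('I_n -> R) -> R)
  (dF : ('I_n -> R) -> 'I_n -> R) : Prop :=
  has_partials F dF /\ forall k q, vcont_at (fun q' => dF q' k) q.

(** Mdot dM q v = d/dt M(q(t)) when q(t) = q, qdot(t) = v, with
    dM q k a b = d M_{ab} / d q_k (q) *)
Definition Mdot {n : nat} (dM : ('I_n -> R) -> 'I_n -> 'I_n -> 'I_n -> R)
  (q v : 'I_n -> R) : 'I_n -> 'I_n -> R :=
  fun a b => rsum (fun k => dM q k a b * v k).

(** gradient in q of (1/2) v^T M(q) v *)
Definition grad_kin {n : nat} (dM : ('I_n -> R) -> 'I_n -> 'I_n -> 'I_n -> R)
  (q v : 'I_n -> R) : 'I_n -> R :=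
  fun k => / 2 * rsum (fun a => rsum (fun b => v a * dM q k a b * v b)).

Definition rcont_at (f : R -> R) (t0 : R) : Prop :=
  forall eps, 0 < eps -> exists delta, 0 < delta /\
    forall t, t0 <= t < t0 + delta -> Rabs (f t - f t0) < eps.

Definition Mstack {N n : nat} (Mi : 'I_N -> ('I_n -> R) -> 'I_n -> 'I_n -> R)
  (q : 'I_N * 'I_n -> R) : 'I_N * 'I_n -> 'I_N * 'I_n -> R :=
  bdiag (fun i => Mi i (blk q i)).

Definition qtil {N n : nat} (q : 'I_N * 'I_n -> R) (qd : 'I_n -> R) : 'I_N * 'I_n -> R :=
  fun p => q p - qd p.2.

Definition vref {N n : nat} (Pi : 'I_N -> 'I_n -> 'I_n -> R)
  (q : 'I_N * 'I_n -> R) (qd qd1 : 'I_n -> R) : 'I_N * 'I_n -> R :=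
  fun p => qd1 p.2 - mv (bdiag Pi) (qtil q qd) p.

Definition svar {N n : nat} (Pi : 'I_N -> 'I_n -> 'I_n -> R)
  (q v : 'I_N * 'I_n -> R) (qd qd1 : 'I_n -> R) : 'I_N * 'I_n -> R :=
  vsub v (vref Pi q qd qd1).

Definition Pzeta {Mm n : nat} (Kz : 'I_Mm * 'I_n -> 'I_Mm * 'I_n -> R)
  (zd z : 'I_Mm * 'I_n -> R) : R := / 2 * quad Kz (vsub z zd).

Definition Sfun {N Mm n : nat} (Pi : 'I_N -> 'I_n -> 'I_n -> R)
  (Mi : 'I_N -> ('I_n -> R) -> 'I_n -> 'I_n -> R)
  (Kz : 'I_Mm * 'I_n -> 'I_Mm * 'I_n -> R) (zd : 'I_Mm * 'I_n -> R)
  (qt s : 'I_N * 'I_n -> R) (z : 'I_Mm * 'I_n -> R) (q : 'I_N * 'I_n -> R) : R :=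
  / 2 * quad (bdiag Pi) qt + / 2 * quad (Mstack Mi q) s + Pzeta Kz zd z.

Definition Sdot_val {N Mm n : nat} (Pi Ki : 'I_N -> 'I_n -> 'I_n -> R)
  (Kz : 'I_Mm * 'I_n -> 'I_Mm * 'I_n -> R) (zd : 'I_Mm * 'I_n -> R)
  (qt s : 'I_N * 'I_n -> R) (z : 'I_Mm * 'I_n -> R) : R :=
  - quad (mm (bdiag Pi) (bdiag Pi)) qt - quad (bdiag Ki) s
  - quad (mm Kz Kz) (vsub z zd).

(** (q, v, zeta) : [t0, +oo) -> R^{Nn} x R^{Nn} x R^{Mn} is a solution of the
    agent dynamics  qdot_i = v_i,  M_i(q_i) vdot_i + C_i(q_i,v_i) v_i + g_i(q_i) = tau_i
    under the control law
      tau_i = M_i(q_i) vdot_{i,r} + C_i(q_i, qdot_i) v_{i,r} + g_i(q_i) - K_i s_i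
              - Pi_i qtilde_i + u_i,
    edge dynamics  zetadot = mu - dP_zeta/dzeta(zeta) = mu - Kz (zeta - zeta_d),
    interconnection  mu = (B^T (x) I_n) s,  u = -(B (x) I_n) Kz (zeta - zeta_d).
    The equations hold (with two-sided derivatives) for t > t0, and the
    trajectories are right-continuous at t0.  D k is the k-th derivative of q_d
    (D 0 = q_d). vdot, zdot, vrdot are the time derivatives of v, zeta, v_r. *)
Definition cl_solution {N Mm n : nat} (B : 'I_N -> 'I_Mm -> R)
  (Mi : 'I_N -> ('I_n -> R) -> 'I_n -> 'I_n -> R)
  (Ci : 'I_N -> ('I_n -> R) -> ('I_n -> R) -> 'I_n -> 'I_n -> R)
  (gi : 'I_N -> ('I_n -> R) -> 'I_n -> R)
  (Pi Ki : 'I_N -> 'I_n -> 'I_n -> R)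
  (Kz : 'I_Mm * 'I_n -> 'I_Mm * 'I_n -> R) (zd : 'I_Mm * 'I_n -> R)
  (D : nat -> R -> 'I_n -> R) (t0 : R)
  (q v vdot vrdot tau : R -> 'I_N * 'I_n -> R)
  (z zdot : R -> 'I_Mm * 'I_n -> R) : Prop :=
  (forall p, rcont_at (fun t => q t p) t0) /\
  (forall p, rcont_at (fun t => v t p) t0) /\
  (forall e, rcont_at (fun t => z t e) t0) /\
  forall t, t0 < t ->
    let qt := qtil (q t) (D 0%nat t) in
    let vr := vref Pi (q t) (D 0%nat t) (D 1%nat t) in
    let s := svar Pi (q t) (v t) (D 0%nat t) (D 1%nat t) in
    let u := fun p => - mv (@kronI N Mm n B) (mv Kz (vsub (z t) zd)) p in
    let mu := mv (tr (@kronI N Mm n B)) s in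
    (forall p, derivable_pt_lim (fun t' => q t' p) t (v t p)) /\
    (forall p, derivable_pt_lim (fun t' => v t' p) t (vdot t p)) /\
    (forall e, derivable_pt_lim (fun t' => z t' e) t (zdot t e)) /\
    (forall p, derivable_pt_lim
                 (fun t' => vref Pi (q t') (D 0%nat t') (D 1%nat t') p) t (vrdot t p)) /\
    (forall i a,
       tau t (i, a) =
         mv (Mi i (blk (q t) i)) (blk (vrdot t) i) a
       + mv (Ci i (blk (q t) i) (blk (v t) i)) (blk vr i) a
       + gi i (blk (q t) i) a
       - mv (Ki i) (blk s i) a
       - mv (Pi i) (blk qt i) a
       + u (i, a)) /\
    (forall i a,
       mv (Mi i (blk (q t) i)) (blk (vdot t) i) a
       + mv (Ci i (blk (q t) i) (blk (v t) i)) (blk (v t) i) a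
       + gi i (blk (q t) i) a = tau t (i, a)) /\
    (forall e, zdot t e = mu e - mv Kz (vsub (z t) zd) e).

(* Main.v *)
Require Import Defs.
From mathcomp Require Import ssreflect ssrfun ssrbool eqtype ssrnat seq choice fintype bigop.
From Stdlib Require Import Reals Lra Classical FunctionalExtensionality.
From mathcomp Require Import ssralg matrix Rstruct.
Set Implicit Arguments.
Unset Strict Implicit.
Unset Printing Implicit Defensive.
Local Open Scope R_scope.


Section RS.
Variable I : finType.
Implicit Types F G : I -> R.

Lemma rsum_ext F G : (forall p, F p = G p) -> rsum F = rsum G.
Proof. by move=> h; rewrite /rsum; apply: eq_bigr => p _; rewrite h. Qed.
Lemma rsum_plus F G : rsum (fun p => F p + G p) = rsum F + rsum G.
Proof. by rewrite /rsum big_split. Qed.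
Lemma rsum_scal c F : rsum (fun p => c * F p) = c * rsum F.
Proof. by rewrite /rsum big_distrr. Qed.
Lemma rsum_scalr c F : rsum (fun p => F p * c) = rsum F * c.
Proof. rewrite Rmult_comm -rsum_scal; apply: rsum_ext => p; ring. Qed.
Lemma rsum0 : rsum (fun _ : I => 0) = 0.
Proof. by rewrite /rsum big1. Qed.
Lemma rsum_opp F : rsum (fun p => - F p) = - rsum F.
Proof. have -> : - rsum F = (-1) * rsum F by ring. rewrite -rsum_scal; apply: rsum_ext => p; ring. Qed.
Lemma rsum_minus F G : rsum (fun p => F p - G p) = rsum F - rsum G.
Proof. by rewrite /Rminus -rsum_opp -rsum_plus. Qed.
Lemma rsum_le F G : (forall p, F p <= G p) -> rsum F <= rsum G.
Proof. move=> h; rewrite /rsum; apply: (big_ind2 (fun a b => a <= b)) => //; [lra| move=> *; lra]. Qed.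
Lemma rsum_ge0 F : (forall p, 0 <= F p) -> 0 <= rsum F.
Proof. move=> h; rewrite -rsum0; exact: rsum_le. Qed.
Lemma rsum_delta (c : I -> R) p : rsum (fun r => if r == p then c r else 0) = c p.
Proof. by rewrite /rsum -big_mkcond big_pred1_eq. Qed.
Lemma rsum_delta' (c : I -> R) p : rsum (fun r => if p == r then c r else 0) = c p.
Proof. rewrite -(rsum_delta c p); apply: rsum_ext => r; by rewrite eq_sym. Qed.
Lemma rsum_term F p : (forall r, 0 <= F r) -> F p <= rsum F.
Proof.
move=> h; rewrite -rsum_delta; apply: rsum_le => r; case: eqP => [->|_]; [lra|exact: h].
Qed.
Lemma rsum_abs F : Rabs (rsum F) <= rsum (fun p => Rabs (F p)).
Proof.
rewrite /rsum; apply: (big_ind2 (fun a b => Rabs a <= b)).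
- rewrite Rabs_R0; lra.
- move=> a b c d h1 h2; apply: Rle_trans (Rabs_triang _ _) _; lra.
- move=> p _; lra.
Qed.
Lemma rsum_eq0 F : (forall p, 0 <= F p) -> rsum F = 0 -> forall p, F p = 0.
Proof. move=> h h0 p; have := rsum_term p h; have := h p; lra. Qed.
End RS.

Lemma rsum_swap {I J : finType} (F : I -> J -> R) :
  rsum (fun p => rsum (fun r => F p r)) = rsum (fun r => rsum (fun p => F p r)).
Proof. rewrite /rsum. exact: exchange_big. Qed.
Lemma rsum_pair {I J : finType} (F : I * J -> R) :
  rsum F = rsum (fun i => rsum (fun a => F (i,a))).
Proof. rewrite /rsum pair_big. by apply: eq_bigr => -[]. Qed.

Definition bil {I : finType} (A : I -> I -> R) (x y : I -> R) := dot x (mv A y).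

Lemma bil2 {I : finType} (A : I -> I -> R) x y :
  bil A x y = rsum (fun p => rsum (fun r => x p * A p r * y r)).
Proof.
rewrite /bil /dot /mv; apply: rsum_ext => p; rewrite -rsum_scal; apply: rsum_ext => r; ring.
Qed.
Lemma quad2 {I : finType} (A : I -> I -> R) x :
  quad A x = rsum (fun p => rsum (fun r => x p * A p r * x r)).
Proof. exact: bil2. Qed.

Lemma bil_sym {I : finType} (A : I -> I -> R) x y : msym A -> bil A x y = bil A y x.
Proof.
move=> hA; rewrite !bil2 rsum_swap; apply: rsum_ext => p; apply: rsum_ext => r; rewrite hA; ring.
Qed.

Lemma dot_sym {I : finType} (x y : I -> R) : dot x y = dot y x.
Proof. by apply: rsum_ext => p; ring. Qed.

Lemma mv_tr {I J : finType} (A : I -> J -> R) x y : dot x (mv (tr A) y) = dot (mv A x) y.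
Proof.
rewrite /dot /mv /tr.
transitivity (rsum (fun p => rsum (fun r => x p * A r p * y r))).
  by apply: rsum_ext => p; rewrite -rsum_scal; apply: rsum_ext => r; ring.
rewrite rsum_swap; apply: rsum_ext => r; rewrite -rsum_scalr; apply: rsum_ext => p; ring.
Qed.

Lemma mv_mm {I J K : finType} (A : I -> J -> R) (C : J -> K -> R) x p :
  mv (mm A C) x p = mv A (mv C x) p.
Proof.
rewrite /mv /mm.
transitivity (rsum (fun r => rsum (fun j => A p j * C j r * x r))).
  by apply: rsum_ext => r; rewrite -rsum_scalr; apply: rsum_ext => j; ring.
rewrite rsum_swap; apply: rsum_ext => j; rewrite -rsum_scal; apply: rsum_ext => r; ring.
Qed.

Lemma mv_lin {I J : finType} (A : I -> J -> R) a b x y p :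
  mv A (fun r => a * x r + b * y r) p = a * mv A x p + b * mv A y p.
Proof. rewrite /mv -!rsum_scal -rsum_plus; apply: rsum_ext => r; ring. Qed.

Lemma mv_sub {I J : finType} (A : I -> J -> R) x y p :
  mv A (vsub x y) p = mv A x p - mv A y p.
Proof. rewrite /mv /vsub -rsum_minus; apply: rsum_ext => r; ring. Qed.

Lemma mv_bdiag {N n : nat} (F : 'I_N -> 'I_n -> 'I_n -> R) x i a :
  mv (bdiag F) x (i, a) = mv (F i) (blk x i) a.
Proof.
rewrite /mv /bdiag rsum_pair /=.
rewrite (rsum_ext (G := fun j => if j == i then rsum (fun b => F i a b * x (i, b)) else 0)).
  by rewrite rsum_delta.
move=> j /=; case: (eqVneq j i) => [->|hne] //.
by rewrite (rsum_ext (G := fun _ => 0)) ?rsum0 // => b; ring.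
Qed.

Lemma dot_pair {N n : nat} (x y : 'I_N * 'I_n -> R) :
  dot x y = rsum (fun i => dot (blk x i) (blk y i)).
Proof. exact: rsum_pair. Qed.

Lemma quad_bdiag {N n : nat} (F : 'I_N -> 'I_n -> 'I_n -> R) x :
  quad (bdiag F) x = rsum (fun i => quad (F i) (blk x i)).
Proof. rewrite /quad dot_pair; apply: rsum_ext => i; apply: rsum_ext => a; by rewrite /blk mv_bdiag. Qed.

Lemma sqnorm_ge0 {I : finType} (x : I -> R) : 0 <= sqnorm x.
Proof. apply: rsum_ge0 => p; nra. Qed.

Lemma quad_skew {I : finType} (S : I -> I -> R) x : mskew S -> quad S x = 0.
Proof.
move=> hS; have h : quad S x = - quad S x.
  rewrite !quad2 -rsum_opp rsum_swap; apply: rsum_ext => p; rewrite -rsum_opp; apply: rsum_ext => r.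
  rewrite hS; ring.
lra.
Qed.

Lemma quad_mlin {I : finType} (A B : I -> I -> R) a b x :
  quad (fun p r => a * A p r + b * B p r) x = a * quad A x + b * quad B x.
Proof.
rewrite !quad2 -!rsum_scal -rsum_plus; apply: rsum_ext => p.
rewrite -!rsum_scal -rsum_plus; apply: rsum_ext => r; ring.
Qed.

Lemma quad_expand {I : finType} (A : I -> I -> R) x y c : msym A ->
  quad A (fun p => x p + c * y p) = quad A x + 2 * c * bil A x y + c * c * quad A y.
Proof.
move=> hA.
have e : quad A (fun p => x p + c * y p) = quad A x + c * bil A x y + c * bil A y x + c * c * quad A y.
  rewrite !quad2 !bil2 -!rsum_scal -!rsum_plus; apply: rsum_ext => p.
  rewrite -!rsum_scal -!rsum_plus; apply: rsum_ext => r; ring.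
rewrite e (bil_sym _ _ hA); ring.
Qed.

Lemma quad_scal {I : finType} (A : I -> I -> R) x c :
  quad A (fun p => c * x p) = c * c * quad A x.
Proof. rewrite !quad2 -!rsum_scal; apply: rsum_ext => p; rewrite -!rsum_scal; apply: rsum_ext => r; ring. Qed.

Lemma sqnorm_scal {I : finType} (x : I -> R) c : sqnorm (fun p => c * x p) = c * c * sqnorm x.
Proof. rewrite /sqnorm /dot -!rsum_scal; apply: rsum_ext => p; ring. Qed.

Lemma sqnorm_pair {N n : nat} (x : 'I_N * 'I_n -> R) :
  sqnorm x = rsum (fun i => sqnorm (blk x i)).
Proof. exact: dot_pair. Qed.


Definition Cb {I : finType} (A : I -> I -> R) := rsum (fun p => rsum (fun r => Rabs (A p r))).

Lemma Cb_ge0 {I : finType} (A : I -> I -> R) : 0 <= Cb A.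
Proof. apply: rsum_ge0 => p; apply: rsum_ge0 => r; exact: Rabs_pos. Qed.

Lemma sq_le_sqnorm {I : finType} (x : I -> R) p : x p * x p <= sqnorm x.
Proof. apply: (rsum_term (F := fun r => x r * x r)) => r; nra. Qed.

Lemma quad_bound {I : finType} (A : I -> I -> R) x : Rabs (quad A x) <= Cb A * sqnorm x.
Proof.
rewrite quad2 /Cb -rsum_scalr; apply: Rle_trans (rsum_abs _) _; apply: rsum_le => p.
apply: Rle_trans (rsum_abs _) _; rewrite -rsum_scalr; apply: rsum_le => r.
have h1 := sq_le_sqnorm x p; have h2 := sq_le_sqnorm x r.
rewrite !Rabs_mult.
have : Rabs (x p) * Rabs (x r) <= sqnorm x.
  have := Rabs_pos (x p); have := Rabs_pos (x r).
  have e1 : Rabs (x p) * Rabs (x p) = x p * x p by rewrite -Rabs_mult Rabs_right //; nra.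
  have e2 : Rabs (x r) * Rabs (x r) = x r * x r by rewrite -Rabs_mult Rabs_right //; nra.
  nra.
have := Rabs_pos (A p r); nra.
Qed.

Lemma sum_reindex {I : finType} (F : 'I_#|I| -> R) :
  rsum F = rsum (fun p : I => F (enum_rank p)).
Proof. rewrite /rsum (reindex enum_rank) //; apply: onW_bij; exact: enum_rank_bij. Qed.

Lemma rayleigh {I : finType} (A : I -> I -> R) (p0 : I) : msym A ->
  exists l, eigenvalue A l /\ forall x, quad A x <= l * sqnorm x.
Proof.
move=> hA.
pose E := fun r => exists x : I -> R, sqnorm x = 1 /\ r = quad A x.
have bE : bound E.
  exists (Cb A) => r [x [h1 ->]]; have := quad_bound A x; rewrite h1.
  have := Rle_abs (quad A x); lra.
have nE : exists r, E r.
  pose x0 := fun r : I => if r == p0 then 1 else 0.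
  exists (quad A x0), x0; split => //.
  rewrite /sqnorm /dot -(rsum_delta (fun _ => 1) p0); apply: rsum_ext => r.
  rewrite /x0; case: eqP => _; ring.
have [l [lub1 lub2]] := completeness E bE nE.
have C1 : forall y, quad A y <= l * sqnorm y.
  move=> y; have := sqnorm_ge0 y; case=> hs; last first.
    have := quad_bound A y; rewrite -hs; have := Rle_abs (quad A y); lra.
  set s := sqnorm y in hs *.
  pose c := / sqrt s.
  have hsq : sqrt s * sqrt s = s by apply: sqrt_sqrt; lra.
  have hsp : 0 < sqrt s by apply: sqrt_lt_R0.
  have hcc : c * c = / s by rewrite /c -Rinv_mult hsq.
  have Ex : E (quad A (fun p => c * y p)).
    exists (fun p => c * y p); split => //; rewrite sqnorm_scal hcc -/s; field; lra.
  have := lub1 _ Ex; rewrite quad_scal hcc => h.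
  have : quad A y = s * (/ s * quad A y) by field; lra.
  move=> ->; apply: Rle_trans (Rmult_le_compat_l _ _ _ _ h) _; lra.
exists l; split; last exact: C1.
pose P := fun p r : I => (if p == r then l else 0) - A p r.
have hP : msym P by move=> p r; rewrite /P hA eq_sym.
have mvP : forall x r, mv P x r = l * x r - mv A x r.
  move=> x r; rewrite /mv -(rsum_delta' (fun p => l * x p) r) -rsum_minus.
  apply: rsum_ext => p; rewrite /P; case: eqP => _; ring.
have quadP : forall x, quad P x = l * sqnorm x - quad A x.
  move=> x; rewrite /quad /sqnorm /dot -rsum_scal -rsum_minus; apply: rsum_ext => p.
  rewrite mvP; ring.
have psd : forall x, 0 <= quad P x by move=> x; rewrite quadP; have := C1 x; lra.
pose Pm : 'M[R]_#|I| := (\matrix_(i, j) P (enum_val i) (enum_val j))%R.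
case: (boolP (\det Pm == 0)%R).
- move/det0P => [v vn0 vP].
  pose x := fun p : I => v ord0 (enum_rank p).
  exists x; split.
  + apply: NNPP => hn; apply: (negP vn0); apply/eqP/rowP => j; rewrite mxE.
    apply: NNPP => hj; apply: hn; exists (enum_val j); by rewrite /x enum_valK.
  + move=> r; have : mv P x r = 0.
      have e := congr1 (fun M : 'rV[R]_#|I| => M ord0 (enum_rank r)) vP.
      move: e; rewrite /= !mxE => e; rewrite -[RHS]e.
      change (mv P x r = rsum (fun j => v ord0 j * Pm j (enum_rank r))).
      rewrite sum_reindex; apply: rsum_ext => p; rewrite mxE !enum_rankK hP /x; exact: Rmult_comm.
    rewrite mvP; lra.
- move=> hdet; have hu : Pm \in unitmx by rewrite unitmxE GRing.unitfE.
  pose Q := invmx Pm.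
  pose Q' := fun r p : I => Q (enum_rank r) (enum_rank p).
  pose Cq := rsum (fun p => rsum (fun r => Rabs (Q' r p)) * rsum (fun r => Rabs (Q' r p))).
  have Cq0 : 0 <= Cq by apply: rsum_ge0 => p; have := rsum_ge0 (fun r => Rabs_pos (Q' r p)); nra.
  have Hinv : forall x, sqnorm x <= Cq * sqnorm (mv P x).
    move=> x; set w := mv P x.
    have xe : forall p, x p = rsum (fun r => w r * Q' r p).
      move=> p.
      pose xv : 'rV[R]_#|I| := (\row_i x (enum_val i))%R.
      pose wv : 'rV[R]_#|I| := (\row_i w (enum_val i))%R.
      have e1 : (xv *m Pm)%R = wv.
        apply/rowP => j; rewrite !mxE.
        change (rsum (fun i => xv ord0 i * Pm i j) = w (enum_val j)).
        rewrite sum_reindex /w /mv; apply: rsum_ext => q; rewrite !mxE enum_rankK hP; exact: Rmult_comm.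
      have e2 : xv = (wv *m Q)%R by rewrite -e1 mulmxK.
      have := congr1 (fun M : 'rV[R]_#|I| => M ord0 (enum_rank p)) e2.
      rewrite /= !mxE enum_rankK => ->.
      change (rsum (fun j => wv ord0 j * Q j (enum_rank p)) = rsum (fun r => w r * Q' r p)).
      rewrite sum_reindex; apply: rsum_ext => r; by rewrite mxE enum_rankK.
    have hw : forall r, Rabs (w r) <= sqrt (sqnorm w).
      move=> r; rewrite -sqrt_Rsqr_abs; apply: sqrt_le_1_alt.
      rewrite /Rsqr; exact: sq_le_sqnorm.
    have hsw : sqrt (sqnorm w) * sqrt (sqnorm w) = sqnorm w by apply: sqrt_sqrt; exact: sqnorm_ge0.
    rewrite /Cq -rsum_scalr; apply: rsum_le => p.
    have hb : Rabs (x p) <= rsum (fun r => Rabs (Q' r p)) * sqrt (sqnorm w).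
      rewrite xe -rsum_scalr; apply: Rle_trans (rsum_abs _) _; apply: rsum_le => r.
      rewrite Rabs_mult Rmult_comm; apply: Rmult_le_compat_l; [exact: Rabs_pos| exact: hw].
    have := Rabs_pos (x p).
    have e : x p * x p = Rabs (x p) * Rabs (x p) by rewrite -Rabs_mult Rabs_right //; nra.
    rewrite e; move=> hx0.
    set a := rsum _ in hb *; set b := sqrt _ in hb hsw *.
    have : Rabs (x p) * Rabs (x p) <= (a * b) * (a * b) by apply: Rmult_le_compat.
    nra.
  pose CP := Cb P + 1.
  have CP0 : 0 < CP by have := Cb_ge0 P; rewrite /CP; lra.
  have Hcs : forall x, sqnorm (mv P x) <= CP * quad P x.
    move=> x; set w := mv P x.
    have h := psd (fun p => x p + (- / CP) * w p).
    rewrite quad_expand // in h.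
    have eb : bil P x w = sqnorm w.
      by rewrite bil_sym // /bil /sqnorm.
    rewrite eb in h.
    have hq : quad P w <= CP * sqnorm w.
      have := quad_bound P w; have := Rle_abs (quad P w); have := sqnorm_ge0 w; rewrite /CP; nra.
    have hsw := sqnorm_ge0 w.
    have hi : 0 < / CP by apply: Rinv_0_lt_compat.
    have hic : / CP * CP = 1 by field; lra.
    set sw := sqnorm w in h hq hsw *; set qp := quad P x in h *; set ic := / CP in h hi hic.
    have h3 : ic * ic * quad P w <= ic * sw.
      have : ic * ic * quad P w <= ic * ic * (CP * sw) by apply: Rmult_le_compat_l; nra.
      have -> : ic * ic * (CP * sw) = ic * (ic * CP) * sw by ring.
      rewrite hic; lra.
    have h2 : ic * sw <= qp by nra.
    have : sw = CP * (ic * sw) by rewrite -Rmult_assoc (Rmult_comm CP) hic; ring.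
    nra.
  pose K := Cq * CP.
  have K0 : 0 <= K by rewrite /K; nra.
  have ub : is_upper_bound E (l - / (K + 1)).
    move=> r [x [h1 ->]].
    have h2 := Hinv x; have h3 := Hcs x; rewrite h1 in h2.
    have h4 := quadP x; rewrite h1 in h4.
    have h5 : 1 <= K * quad P x by rewrite /K; nra.
    have h6 := psd x.
    have hk : 0 < K + 1 by lra.
    have : / (K + 1) <= quad P x.
      apply: (Rmult_le_reg_l (K + 1)) => //; rewrite Rinv_r; [nra|lra].
    lra.
  have := lub2 _ ub; have : 0 < / (K + 1) by apply: Rinv_0_lt_compat; lra.
  lra.
Qed.


Lemma quad_eig {I : finType} (A : I -> I -> R) x mu :
  (forall p, mv A x p = mu * x p) -> quad A x = mu * sqnorm x.
Proof. move=> h; rewrite /quad /sqnorm /dot -rsum_scal; apply: rsum_ext => p; rewrite h; ring. Qed.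

Lemma sqnorm_pos {I : finType} (x : I -> R) : Defs.nonzero x -> 0 < sqnorm x.
Proof.
move=> [p hp]; have := sqnorm_ge0 x; case=> // h.
exfalso; apply: hp; have := rsum_eq0 (F := fun r => x r * x r) (fun r => ltac:(nra)) (esym h) p.
nra.
Qed.

Lemma eig_ne {I : finType} (A : I -> I -> R) l : eigenvalue A l -> exists p : I, True.
Proof. by move=> [x [[p _] _]]; exists p. Qed.

Lemma lmax_bound {I : finType} (A : I -> I -> R) l : msym A -> is_lambda_max A l ->
  forall x, quad A x <= l * sqnorm x.
Proof.
move=> hA [he hm] x; have [p0 _] := eig_ne he.
have [m [hme hmb]] := rayleigh p0 hA.
have := hm _ hme; have := hmb x; have := sqnorm_ge0 x; nra.
Qed.

Definition mneg {I : finType} (A : I -> I -> R) := fun p r => - A p r.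
Lemma quad_neg {I : finType} (A : I -> I -> R) x : quad (mneg A) x = - quad A x.
Proof. rewrite !quad2 -rsum_opp; apply: rsum_ext => p; rewrite -rsum_opp; apply: rsum_ext => r; rewrite /mneg; ring. Qed.
Lemma mv_neg {I : finType} (A : I -> I -> R) x p : mv (mneg A) x p = - mv A x p.
Proof. rewrite /mv -rsum_opp; apply: rsum_ext => r; rewrite /mneg; ring. Qed.
Lemma eig_neg {I : finType} (A : I -> I -> R) l : eigenvalue (mneg A) l -> eigenvalue A (- l).
Proof. move=> [x [hx h]]; exists x; split => // p; have := h p; rewrite mv_neg; lra. Qed.
Lemma msym_neg {I : finType} (A : I -> I -> R) : msym A -> msym (mneg A).
Proof. by move=> h p r; rewrite /mneg h. Qed.

Lemma lmin_bound {I : finType} (A : I -> I -> R) l : msym A -> is_lambda_min A l ->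
  forall x, l * sqnorm x <= quad A x.
Proof.
move=> hA [he hm] x; have [p0 _] := eig_ne he.
have [m [hme hmb]] := rayleigh p0 (msym_neg hA).
have := hm _ (eig_neg hme); have := hmb x; rewrite quad_neg; have := sqnorm_ge0 x; nra.
Qed.

Lemma lmax_exists {I : finType} (A : I -> I -> R) (p0 : I) : msym A ->
  exists l, is_lambda_max A l.
Proof.
move=> hA; have [m [hme hmb]] := rayleigh p0 hA.
exists m; split => // mu [x [hx h]].
have := hmb x; rewrite (quad_eig h); have := sqnorm_pos hx; nra.
Qed.

Lemma spd_eig_pos {I : finType} (A : I -> I -> R) mu : spd A -> eigenvalue A mu -> 0 < mu.
Proof.
move=> [_ hA] [x [hx h]]; have := hA x hx; rewrite (quad_eig h); have := sqnorm_pos hx; nra.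
Qed.

Lemma spd_lower {I : finType} (A : I -> I -> R) (p0 : I) : spd A ->
  exists c, 0 < c /\ forall x, c * sqnorm x <= quad A x.
Proof.
move=> hs; have [m [hme hmb]] := rayleigh p0 (msym_neg hs.1).
exists (- m); split; first exact: spd_eig_pos hs (eig_neg hme).
move=> x; have := hmb x; rewrite quad_neg; lra.
Qed.

Lemma msym_mm {I : finType} (A : I -> I -> R) : msym A -> msym (mm A A).
Proof. move=> h p r; rewrite /mm; apply: rsum_ext => j; rewrite (h p j) (h j r); ring. Qed.

Lemma quad_mm {I : finType} (A : I -> I -> R) x : msym A -> quad (mm A A) x = sqnorm (mv A x).
Proof.
move=> h; rewrite /quad /dot.
rewrite (rsum_ext (G := fun p => x p * mv A (mv A x) p)); last by move=> p; rewrite mv_mm.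
change (bil A x (mv A x) = sqnorm (mv A x)); rewrite bil_sym //.
Qed.

Lemma spd_mm {I : finType} (A : I -> I -> R) : spd A -> spd (mm A A).
Proof.
move=> [hs hp]; split; first exact: msym_mm.
move=> x hx; rewrite quad_mm //; apply: sqnorm_pos.
apply: NNPP => hn; have := hp x hx.
have e : quad A x = 0.
  rewrite /quad /dot (rsum_ext (G := fun _ => 0)) ?rsum0 // => p.
  have : mv A x p = 0 by apply: NNPP => h; apply: hn; exists p.
  move=> ->; ring.
lra.
Qed.

Lemma msym_bdiag {N n : nat} (F : 'I_N -> 'I_n -> 'I_n -> R) :
  (forall i, msym (F i)) -> msym (bdiag F).
Proof.
move=> h p r; rewrite /bdiag eq_sym; case: eqP => // e; rewrite e h //.
Qed.

Lemma spd_bdiag {N n : nat} (F : 'I_N -> 'I_n -> 'I_n -> R) :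
  (forall i, spd (F i)) -> spd (bdiag F).
Proof.
move=> h; split; first by apply: msym_bdiag => i; exact: (h i).1.
move=> x [[i a] hx]; rewrite quad_bdiag.
have hnz : Defs.nonzero (blk x i) by exists a.
have hpos := (h i).2 _ hnz.
have hge : forall j, 0 <= quad (F j) (blk x j).
  move=> j; case: (classic (Defs.nonzero (blk x j))) => hj.
    by apply: Rlt_le; apply: (h j).2.
  suff -> : quad (F j) (blk x j) = 0 by lra.
  rewrite /quad /dot (rsum_ext (G := fun _ => 0)) ?rsum0 // => b.
  have : blk x j b = 0 by apply: NNPP => hb; apply: hj; exists b.
  move=> ->; ring.
apply: Rlt_le_trans hpos _; exact: (rsum_term (F := fun j => quad (F j) (blk x j)) i hge).
Qed.


Lemma dext (f g : R -> R) t l : (forall u, f u = g u) -> derivable_pt_lim g t l -> derivable_pt_lim f t l.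
Proof. by move=> h; have -> : f = g by apply: functional_extensionality. Qed.
Lemma dconst c t : derivable_pt_lim (fun _ => c) t 0.
Proof. exact: derivable_pt_lim_const. Qed.
Lemma dplus (f g : R -> R) t a b : derivable_pt_lim f t a -> derivable_pt_lim g t b ->
  derivable_pt_lim (fun u => f u + g u) t (a + b).
Proof. exact: derivable_pt_lim_plus. Qed.
Lemma dminus (f g : R -> R) t a b : derivable_pt_lim f t a -> derivable_pt_lim g t b ->
  derivable_pt_lim (fun u => f u - g u) t (a - b).
Proof. exact: derivable_pt_lim_minus. Qed.
Lemma dmul (f g : R -> R) t a b : derivable_pt_lim f t a -> derivable_pt_lim g t b ->
  derivable_pt_lim (fun u => f u * g u) t (a * g t + f t * b).
Proof. exact: derivable_pt_lim_mult. Qed.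
Lemma dscal (f : R -> R) c t a : derivable_pt_lim f t a ->
  derivable_pt_lim (fun u => c * f u) t (c * a).
Proof. move=> h; have := dmul (dconst c t) h; rewrite Rmult_0_l Rplus_0_l; exact. Qed.

Lemma dbig (T : Type) (s : seq T) (f : T -> R -> R) df t :
  (forall p, derivable_pt_lim (f p) t (df p)) ->
  derivable_pt_lim (fun u => \big[Rplus/R0]_(p <- s) f p u) t (\big[Rplus/R0]_(p <- s) df p).
Proof.
move=> h; elim: s => [|p s IH].
  apply: (dext (g := fun _ => 0)) => [u|]; first by rewrite big_nil.
  rewrite big_nil; exact: dconst.
apply: (dext (g := fun u => f p u + \big[Rplus/R0]_(q <- s) f q u)) => [u|]; first by rewrite big_cons.
rewrite big_cons; exact: dplus.
Qed.

Lemma drsum {I : finType} (f : I -> R -> R) df t :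
  (forall p, derivable_pt_lim (f p) t (df p)) ->
  derivable_pt_lim (fun u => rsum (fun p => f p u)) t (rsum df).
Proof. exact: dbig. Qed.

Lemma rc_iff f t0 : rcont_at f t0 <-> limit1_in f (fun u => t0 <= u) (f t0) t0.
Proof.
split.
- move=> h eps he; have [d [hd hh]] := h eps he; exists d; split => // x [hx1 hx2].
  move: hx2; rewrite /= /R_dist => hx2; apply: hh.
  have := Rle_abs (x - t0); lra.
- move=> h eps he; have [d [hd hh]] := h eps he; exists d; split => // x hx.
  have := hh x; rewrite /= /R_dist; apply; split; first lra.
  rewrite Rabs_right; lra.
Qed.
Lemma rc_plus f g t0 : rcont_at f t0 -> rcont_at g t0 -> rcont_at (fun u => f u + g u) t0.
Proof. rewrite !rc_iff; exact: limit_plus. Qed.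
Lemma rc_mul f g t0 : rcont_at f t0 -> rcont_at g t0 -> rcont_at (fun u => f u * g u) t0.
Proof. rewrite !rc_iff; exact: limit_mul. Qed.
Lemma rc_const c t0 : rcont_at (fun _ => c) t0.
Proof. move=> eps he; exists 1; split; [lra|] => t _; rewrite Rminus_diag Rabs_R0; lra. Qed.
Lemma rc_opp f t0 : rcont_at f t0 -> rcont_at (fun u => - f u) t0.
Proof.
move=> h; apply: (rc_iff _ _).2; have := (rc_iff _ _).1 (rc_mul (rc_const (-1) t0) h).
move=> h2 eps he; have [d [hd hh]] := h2 eps he; exists d; split => // x hx.
have := hh x hx; rewrite /= /R_dist.
by have -> : -1 * f x - -1 * f t0 = - f x - - f t0 by ring.
Qed.
Lemma rc_minus f g t0 : rcont_at f t0 -> rcont_at g t0 -> rcont_at (fun u => f u - g u) t0.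
Proof. move=> h1 h2; exact: rc_plus h1 (rc_opp h2). Qed.
Lemma rc_ext f g t0 : (forall u, f u = g u) -> rcont_at g t0 -> rcont_at f t0.
Proof. by move=> h; have -> : f = g by apply: functional_extensionality. Qed.
Lemma rc_big (T : Type) (s : seq T) (f : T -> R -> R) t0 :
  (forall p, rcont_at (f p) t0) -> rcont_at (fun u => \big[Rplus/R0]_(p <- s) f p u) t0.
Proof.
move=> h; elim: s => [|p s IH].
  apply: (rc_ext (g := fun _ => 0)) => [u|]; [by rewrite big_nil | exact: rc_const].
apply: (rc_ext (g := fun u => f p u + \big[Rplus/R0]_(q <- s) f q u)) => [u|]; first by rewrite big_cons.
exact: rc_plus.
Qed.
Lemma rc_rsum {I : finType} (f : I -> R -> R) t0 :
  (forall p, rcont_at (f p) t0) -> rcont_at (fun u => rsum (fun p => f p u)) t0.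
Proof. exact: rc_big. Qed.
Lemma rc_deriv f t0 l : derivable_pt_lim f t0 l -> rcont_at f t0.
Proof.
move=> h; have hc : continuity_pt f t0 by apply: derivable_continuous_pt; exists l.
move=> eps he; have [d [hd hh]] := hc eps he; exists d; split => // t [h1 h2].
case: (Req_dec t t0) => [->|hne]; first by rewrite Rminus_diag Rabs_R0.
have := hh t; rewrite /= /R_dist; apply; split.
  by split => //; apply: not_eq_sym.
rewrite Rabs_right; lra.
Qed.

Lemma fin_delta {I : finType} (P : I -> R -> Prop) :
  (forall i d d', 0 < d' <= d -> P i d -> P i d') ->
  (forall i, exists d, 0 < d /\ P i d) -> exists d, 0 < d /\ forall i, P i d.
Proof.
move=> hm h.
suff : forall s : seq I, exists d, 0 < d /\ forall i, i \in s -> P i d.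
  by move=> /(_ (enum I)) [d [hd hh]]; exists d; split => // i; apply: hh; rewrite mem_enum.
elim=> [|a s [d [hd hh]]]; first by exists 1; split => //; lra.
have [d' [hd' hh']] := h a.
exists (Rmin d d'); split; first by apply: Rmin_pos.
move=> i; rewrite inE => /orP [/eqP ->|hi].
  apply: hm hh'; split; [exact: Rmin_pos | exact: Rmin_r].
apply: hm (hh i hi); split; [exact: Rmin_pos | exact: Rmin_l].
Qed.

Lemma between_abs a b c : Rmin a b <= c <= Rmax a b -> Rabs (c - a) <= Rabs (b - a).
Proof. rewrite /Rmin /Rmax; case: Rle_dec => h [h1 h2]; rewrite /Rabs; repeat case: Rcase_abs; lra. Qed.

Section Tele.
Variable n : nat.
Variable F : ('I_n -> R) -> R.
Variable dF : ('I_n -> R) -> 'I_n -> R.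
Hypothesis hF : has_partials F dF.

Definition wpt (y z : 'I_n -> R) (m : nat) : 'I_n -> R :=
  fun k => if (k < m)%nat then z k else y k.

Lemma tele_nat (g : nat -> R) m : \big[Rplus/R0]_(j < m) (g j.+1 - g j) = g m - g O.
Proof.
elim: m => [|m IH]; first by rewrite big_ord0; ring.
rewrite big_ord_recr /= IH; ring.
Qed.

Lemma mvt_step (y z : 'I_n -> R) (j : 'I_n) :
  exists xi : 'I_n -> R, (forall k, Rabs (xi k - y k) <= Rabs (z k - y k)) /\
    F (wpt y z j.+1) - F (wpt y z j) = dF xi j * (z j - y j).
Proof.
set w := wpt y z j.
have ew : wpt y z j.+1 = upd w j (z j).
  apply: functional_extensionality => k; rewrite /wpt /upd /w ltnS leq_eqVlt.
  case: (eqVneq k j) => [->|hne] /=; first by rewrite eqxx.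
  have hn : (nat_of_ord k == nat_of_ord j) = false by apply/negbTE; exact: hne.
  by rewrite hn /=.
have wj : w j = y j by rewrite /w /wpt ltnn.
have wb : forall k, Rabs (w k - y k) <= Rabs (z k - y k).
  move=> k; rewrite /w /wpt; case: ifP => _; first lra.
  rewrite Rminus_diag Rabs_R0; exact: Rabs_pos.
have hd : forall c, derivable_pt_lim (fun x => F (upd w j x)) c (dF (upd w j c) j).
  move=> c; have := hF (upd w j c) j.
  have e1 : upd w j c j = c by rewrite /upd eqxx.
  have e2 : forall x, upd (upd w j c) j x = upd w j x.
    by move=> x; apply: functional_extensionality => k; rewrite /upd; case: eqP.
  rewrite e1; apply: dext => x; by rewrite e2.
have bnd : forall c, Rmin (y j) (z j) <= c <= Rmax (y j) (z j) ->
    forall k, Rabs (upd w j c k - y k) <= Rabs (z k - y k).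
  move=> c hc k; rewrite /upd; case: eqP => [->|_]; last exact: wb.
  exact: between_abs.
rewrite ew.
case: (Rtotal_order (y j) (z j)) => [hlt|[heq|hgt]].
- have [c [hc1 hc2]] := MVT_cor2 (fun x => F (upd w j x)) (fun c => dF (upd w j c) j) _ _ hlt (fun c _ => hd c).
  exists (upd w j c); split.
    apply: bnd; rewrite /Rmin /Rmax; case: Rle_dec; lra.
  have ew2 : w = upd w j (y j).
    by apply: functional_extensionality => k; rewrite /upd; case: eqP => [->|].
  by rewrite {2}ew2.
- exists w; split => //.
  have -> : upd w j (z j) = w.
    by apply: functional_extensionality => k; rewrite /upd; case: eqP => [->|]; rewrite ?wj.
  rewrite heq; ring.
- have [c [hc1 hc2]] := MVT_cor2 (fun x => F (upd w j x)) (fun c => dF (upd w j c) j) _ _ hgt (fun c _ => hd c).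
  exists (upd w j c); split.
    apply: bnd; rewrite /Rmin /Rmax; case: Rle_dec; lra.
  have ew2 : w = upd w j (y j).
    by apply: functional_extensionality => k; rewrite /upd; case: eqP => [->|].
  rewrite {2}ew2 /=; move: hc1 => /= hc1; lra.
Qed.

Lemma tele_mvt (y z : 'I_n -> R) :
  exists xi : 'I_n -> 'I_n -> R, (forall j k, Rabs (xi j k - y k) <= Rabs (z k - y k)) /\
    F z - F y = rsum (fun j => dF (xi j) j * (z j - y j)).
Proof.
have [xi hxi] := fin_all_exists (mvt_step y z).
exists xi; split; first by move=> j; exact: (hxi j).1.
have e0 : wpt y z 0 = y by apply: functional_extensionality.
have en : wpt y z n = z by apply: functional_extensionality => k; rewrite /wpt ltn_ord.
rewrite -{1}en -{2}e0 -(tele_nat (fun m => F (wpt y z m))).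
apply: rsum_ext => j; exact: (hxi j).2.
Qed.
End Tele.

Lemma frechet {n : nat} (F : ('I_n -> R) -> R) dF : C1_with F dF ->
  forall x eps, 0 < eps -> exists delta, 0 < delta /\ forall y,
    (forall k, Rabs (y k - x k) < delta) ->
    Rabs (F y - F x - rsum (fun k => dF x k * (y k - x k))) <= eps * rsum (fun k => Rabs (y k - x k)).
Proof.
move=> [hp hc] x eps he.
have [d [hd hh]] := fin_delta (P := fun k d => forall q', (forall j, Rabs (q' j - x j) < d) ->
                                  Rabs (dF q' k - dF x k) < eps)
  (fun k d d' hdd h q' hq => h q' (fun j => Rlt_le_trans _ _ _ (hq j) (proj2 hdd)))
  (fun k => hc k x eps he).
exists d; split => // y hy.
have [xi [hxi e]] := tele_mvt hp x y.
rewrite e -rsum_minus -rsum_scal; apply: Rle_trans (rsum_abs _) _; apply: rsum_le => k.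
have -> : dF (xi k) k * (y k - x k) - dF x k * (y k - x k) = (dF (xi k) k - dF x k) * (y k - x k) by ring.
rewrite Rabs_mult; apply: Rmult_le_compat_r; first exact: Rabs_pos.
apply: Rlt_le; apply: hh => j; apply: Rle_lt_trans (hxi k j) (hy j).
Qed.


Lemma Rabs_div a b : b <> 0 -> Rabs (a / b) = Rabs a / Rabs b.
Proof. move=> hb; rewrite /Rdiv Rabs_mult Rabs_inv //. Qed.

Lemma chain {n : nat} (F : ('I_n -> R) -> R) dF (c : R -> 'I_n -> R) dc t :
  C1_with F dF -> (forall k, derivable_pt_lim (fun u => c u k) t (dc k)) ->
  derivable_pt_lim (fun u => F (c u)) t (rsum (fun k => dF (c t) k * dc k)).
Proof.
move=> hF hc eps he.
set x := c t; set l := rsum _.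
have hG : derivable_pt_lim (fun u => rsum (fun k => dF x k * c u k)) t l.
  apply: drsum => k; exact: dscal.
have he2 : 0 < eps / 2 by lra.
have [d1 hd1] := hG _ he2.
set B := rsum (fun k => Rabs (dc k) + 1).
have B0 : 0 <= B by apply: rsum_ge0 => k; have := Rabs_pos (dc k); lra.
have hB : forall k, Rabs (dc k) + 1 <= B.
  move=> k; apply: (rsum_term (F := fun k => Rabs (dc k) + 1)) => j; have := Rabs_pos (dc j); lra.
set e' := eps / (2 * (B + 1)).
have he' : 0 < e' by apply: Rdiv_lt_0_compat; lra.
have [dF0 [hdF0 hfr]] := frechet hF x he'.
have [dk [hdk hk]] := fin_delta (P := fun k d => forall h, h <> 0 -> Rabs h < d ->
      Rabs ((c (t + h) k - c t k) / h - dc k) < 1)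
  (fun k d d' hdd hh h hh0 hh1 => hh h hh0 (Rlt_le_trans _ _ _ hh1 (proj2 hdd)))
  (fun k => let: ex_intro d hd := hc k 1 Rlt_0_1 in ex_intro _ (pos d) (conj (cond_pos d) hd)).
have hd3 : 0 < dF0 / (B + 1) by apply: Rdiv_lt_0_compat; lra.
have hdpos : 0 < Rmin d1 (Rmin dk (dF0 / (B + 1))).
  apply: Rmin_pos; [exact: cond_pos| exact: Rmin_pos].
exists (mkposreal _ hdpos) => h hh0 /= hh1.
have h1 : Rabs h < d1 by apply: Rlt_le_trans hh1 (Rmin_l _ _).
have h2 : Rabs h < dk by apply: Rlt_le_trans hh1 (Rle_trans _ _ _ (Rmin_r _ _) (Rmin_l _ _)).
have h3 : Rabs h < dF0 / (B + 1) by apply: Rlt_le_trans hh1 (Rle_trans _ _ _ (Rmin_r _ _) (Rmin_r _ _)).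
have habs : 0 < Rabs h by apply: Rabs_pos_lt.
have hD : forall k, Rabs (c (t + h) k - x k) <= (Rabs (dc k) + 1) * Rabs h.
  move=> k; have := hk k h hh0 h2.
  have -> : (c (t + h) k - c t k) / h - dc k = ((c (t + h) k - x k) - dc k * h) / h by rewrite /x; field.
  rewrite Rabs_div // => hq.
  have : Rabs (c (t + h) k - x k - dc k * h) < Rabs h.
    have := Rmult_lt_compat_r _ _ _ habs hq; rewrite /Rdiv Rmult_assoc Rinv_l; [lra|lra].
  have := Rabs_triang (c (t + h) k - x k - dc k * h) (dc k * h); rewrite Rabs_mult.
  have -> : c (t + h) k - x k - dc k * h + dc k * h = c (t + h) k - x k by ring.
  lra.
have hsmall : forall k, Rabs (c (t + h) k - x k) < dF0.
  move=> k; apply: Rle_lt_trans (hD k) _.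
  have : (Rabs (dc k) + 1) * Rabs h <= (B + 1) * Rabs h by apply: Rmult_le_compat_r; [lra| have := hB k; lra].
  have : (B + 1) * Rabs h < dF0.
    have := Rmult_lt_compat_l (B + 1) _ _ ltac:(lra) h3.
    by rewrite /Rdiv (Rmult_comm dF0) -Rmult_assoc Rinv_r ?Rmult_1_l; lra.
  lra.
have hfr1 := hfr _ hsmall.
have hsum : rsum (fun k => Rabs (c (t + h) k - x k)) <= B * Rabs h.
  rewrite /B -rsum_scalr; apply: rsum_le => k; exact: hD k.
have hq2 := hd1 h hh0 h1.
set S := rsum (fun k => dF x k * (c (t + h) k - x k)) in hfr1.
have eS : rsum (fun k => dF x k * c (t + h) k) - rsum (fun k => dF x k * c t k) = S.
  rewrite -rsum_minus; apply: rsum_ext => k; rewrite /x; ring.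
rewrite eS in hq2.
have -> : (F (c (t + h)) - F x) / h - l = (F (c (t + h)) - F x - S) / h + (S / h - l) by field.
apply: Rle_lt_trans (Rabs_triang _ _) _.
rewrite Rabs_div //.
have : Rabs (F (c (t + h)) - F x - S) / Rabs h <= e' * B.
  apply: (Rmult_le_reg_r (Rabs h)) => //.
  rewrite /Rdiv Rmult_assoc Rinv_l; last lra.
  have := Rmult_le_compat_l e' _ _ (Rlt_le _ _ he') hsum; lra.
have : e' * B < eps / 2.
  rewrite /e'; apply: (Rmult_lt_reg_r (2 * (B + 1))); first lra.
  have -> : eps / (2 * (B + 1)) * B * (2 * (B + 1)) = eps * B by field; lra.
  have -> : eps / 2 * (2 * (B + 1)) = eps * B + eps by field.
  lra.
lra.
Qed.

Lemma rc_comp {n : nat} (F : ('I_n -> R) -> R) dF (c : R -> 'I_n -> R) t0 :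
  C1_with F dF -> (forall k, rcont_at (fun u => c u k) t0) -> rcont_at (fun u => F (c u)) t0.
Proof.
move=> hF hc eps he.
set x := c t0.
have [dF0 [hdF0 hfr]] := frechet hF x Rlt_0_1.
set A := rsum (fun k => Rabs (dF x k) + 1).
have A0 : 0 <= A by apply: rsum_ge0 => k; have := Rabs_pos (dF x k); lra.
set eta := Rmin dF0 (eps / (A + 1)).
have heta : 0 < eta by apply: Rmin_pos => //; apply: Rdiv_lt_0_compat; lra.
have [d [hd hh]] := fin_delta (P := fun k d => forall u, t0 <= u < t0 + d -> Rabs (c u k - x k) < eta)
  (fun k d d' hdd h u hu => h u ltac:(lra))
  (fun k => hc k eta heta).
exists d; split => // u hu.
have hs : forall k, Rabs (c u k - x k) < dF0 by move=> k; apply: Rlt_le_trans (hh k u hu) (Rmin_l _ _).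
have hf := hfr _ hs.
have hlin : Rabs (rsum (fun k => dF x k * (c u k - x k))) <= rsum (fun k => Rabs (dF x k) * Rabs (c u k - x k)).
  apply: Rle_trans (rsum_abs _) _; apply: rsum_le => k; rewrite Rabs_mult; lra.
have hsum : rsum (fun k => Rabs (dF x k) * Rabs (c u k - x k)) + 1 * rsum (fun k => Rabs (c u k - x k)) <= A * eta.
  rewrite Rmult_1_l -rsum_plus /A -rsum_scalr; apply: rsum_le => k.
  have := hh k u hu; have := Rabs_pos (dF x k); have := Rabs_pos (c u k - x k); nra.
have hAe : A * eta < eps.
  have : A * eta <= A * (eps / (A + 1)) by apply: Rmult_le_compat_l => //; exact: Rmin_r.
  have : A * (eps / (A + 1)) < eps.
    apply: (Rmult_lt_reg_r (A + 1)); first lra.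
    have -> : A * (eps / (A + 1)) * (A + 1) = A * eps by field; lra.
    lra.
  lra.
have := Rabs_triang (F (c u) - F x - rsum (fun k => dF x k * (c u k - x k))) (rsum (fun k => dF x k * (c u k - x k))).
have -> : F (c u) - F x - rsum (fun k => dF x k * (c u k - x k)) + rsum (fun k => dF x k * (c u k - x k)) = F (c u) - F x by ring.
lra.
Qed.


Lemma dval f t l l' : derivable_pt_lim f t l -> l = l' -> derivable_pt_lim f t l'.
Proof. by move=> h e; rewrite -e. Qed.

Lemma dquad {I : finType} (A : R -> I -> I -> R) dA (x : R -> I -> R) dx t :
  (forall p r, derivable_pt_lim (fun u => A u p r) t (dA p r)) ->
  (forall p, derivable_pt_lim (fun u => x u p) t (dx p)) ->
  derivable_pt_lim (fun u => quad (A u) (x u)) t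
    (bil (A t) dx (x t) + quad dA (x t) + bil (A t) (x t) dx).
Proof.
move=> hA hx.
apply: (dext (g := fun u => rsum (fun p => rsum (fun r => x u p * A u p r * x u r)))) => [u|].
  exact: quad2.
apply: dval.
  apply: drsum => p; apply: drsum => r; apply: dmul; [apply: dmul|]; [exact: hx|exact: hA|exact: hx].
rewrite !bil2 quad2 -!rsum_plus; apply: rsum_ext => p; rewrite -!rsum_plus; apply: rsum_ext => r; ring.
Qed.

Lemma rc_quad {I : finType} (A : R -> I -> I -> R) (x : R -> I -> R) t0 :
  (forall p r, rcont_at (fun u => A u p r) t0) ->
  (forall p, rcont_at (fun u => x u p) t0) ->
  rcont_at (fun u => quad (A u) (x u)) t0.
Proof.
move=> hA hx.
apply: (rc_ext (g := fun u => rsum (fun p => rsum (fun r => x u p * A u p r * x u r)))) => [u|].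
  exact: quad2.
apply: rc_rsum => p; apply: rc_rsum => r; apply: rc_mul; [apply: rc_mul|]; [exact: hx|exact: hA|exact: hx].
Qed.

Lemma gronwall (S Sd : R -> R) t0 beta :
  rcont_at S t0 ->
  (forall t, t0 < t -> derivable_pt_lim S t (Sd t) /\ Sd t <= - beta * S t) ->
  forall t, t0 <= t -> S t <= exp (- beta * (t - t0)) * S t0.
Proof.
move=> hc hd.
pose f := fun u => exp (beta * (u - t0)) * S u.
have dE : forall u, derivable_pt_lim (fun u => exp (beta * (u - t0))) u (exp (beta * (u - t0)) * beta).
  move=> u.
  have dlin : derivable_pt_lim (fun u => beta * (u - t0)) u beta.
    apply: (dval (dscal beta (dminus (derivable_pt_lim_id u) (dconst t0 u)))); ring.
  apply: (dext (g := comp exp (fun u => beta * (u - t0)))) => [w|] //.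
  apply: (dval (derivable_pt_lim_comp _ _ _ _ _ dlin (derivable_pt_lim_exp _))); rewrite /comp; ring.
have mono : forall a b, t0 < a -> a <= b -> f b <= f a.
  move=> a b ha hab; case: hab => hab; last by rewrite hab; lra.
  have [c [hc1 hc2]] := MVT_cor2 f (fun u => exp (beta * (u - t0)) * beta * S u + exp (beta * (u - t0)) * Sd u) a b hab
    (fun c hc => dmul (dE c) (proj1 (hd c ltac:(lra)))).
  have := proj2 (hd c ltac:(lra)); have := exp_pos (beta * (c - t0)).
  move=> he hs.
  have : exp (beta * (c - t0)) * beta * S c + exp (beta * (c - t0)) * Sd c <= 0.
    have -> : exp (beta * (c - t0)) * beta * S c + exp (beta * (c - t0)) * Sd c =
              exp (beta * (c - t0)) * (beta * S c + Sd c) by ring.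
    nra.
  move=> hn; have : f b - f a <= 0 by rewrite hc1; nra.
  lra.
have fc : rcont_at f t0 by apply: rc_mul => //; exact: rc_deriv (dE t0).
have ft0 : f t0 = S t0.
  rewrite /f; replace (t0 - t0) with 0 by ring; rewrite Rmult_0_r exp_0; ring.
move=> t ht.
have hft : f t <= S t0.
  case: ht => ht; last by rewrite -ht ft0; lra.
  apply: Rnot_lt_le => hlt.
  have [d [hd0 hdd]] := fc (f t - f t0) ltac:(lra).
  pose a := t0 + Rmin d (t - t0) / 2.
  have hm : 0 < Rmin d (t - t0) by apply: Rmin_pos; lra.
  have ha1 : t0 < a by rewrite /a; lra.
  have ha2 : a < t0 + d by have := Rmin_l d (t - t0); rewrite /a; lra.
  have ha3 : a <= t by have := Rmin_r d (t - t0); rewrite /a; lra.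
  have := hdd a ltac:(lra); have := mono a t ha1 ha3; have := Rle_abs (f a - f t0); lra.
have e : S t = exp (- beta * (t - t0)) * f t.
  rewrite /f -Rmult_assoc -exp_plus.
  have -> : - beta * (t - t0) + beta * (t - t0) = 0 by ring.
  rewrite exp_0; ring.
rewrite e; apply: Rmult_le_compat_l => //; exact: Rlt_le (exp_pos _).
Qed.

Unset Implicit Arguments.

Lemma quad_zero {I : finType} (x : I -> R) : quad (fun _ _ => 0) x = 0.
Proof. rewrite quad2 (rsum_ext (G := fun _ => 0)) ?rsum0 // => p; rewrite (rsum_ext (G := fun _ => 0)) ?rsum0 // => r; ring. Qed.

Lemma mv_ext {I J : finType} (A : I -> J -> R) x y p : (forall r, x r = y r) -> mv A x p = mv A y p.
Proof. move=> h; apply: rsum_ext => r; by rewrite h. Qed.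

Theorem mainTheorem1
  (N Mm n : nat)
  (B : 'I_N -> 'I_Mm -> R)
  (Mi : 'I_N -> ('I_n -> R) -> 'I_n -> 'I_n -> R)
  (dM : 'I_N -> ('I_n -> R) -> 'I_n -> 'I_n -> 'I_n -> R)
  (Ci : 'I_N -> ('I_n -> R) -> ('I_n -> R) -> 'I_n -> 'I_n -> R)
  (gi : 'I_N -> ('I_n -> R) -> 'I_n -> R)
  (Pot : 'I_N -> ('I_n -> R) -> R)
  (m1 m2 : R)
  (Pi Ki : 'I_N -> 'I_n -> 'I_n -> R)
  (Kz : 'I_Mm * 'I_n -> 'I_Mm * 'I_n -> R) (zd : 'I_Mm * 'I_n -> R)
  (D : nat -> R -> 'I_n -> R)
  (lPi lM lKz mPi2 mK mKz2 : R)
  (* graph *)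
  (HB : is_incidence B)
  (* standing assumptions on the agents *)
  (HMsym : forall i q, msym (Mi i q))
  (Hm : 0 < m1 <= m2)
  (HMbnd : forall i q x, m1 * sqnorm x <= quad (Mi i q) x <= m2 * sqnorm x)
  (HdM : forall i a b, C1_with (fun q => Mi i q a b) (fun q k => dM i q k a b))
  (HCdef : forall i q v a,
      mv (Ci i q v) v a = mv (Mdot (dM i) q v) v a - grad_kin (dM i) q v a)
  (HCskew : forall i q v, mskew (fun a b => Mdot (dM i) q v a b - 2 * Ci i q v a b))
  (Hg : forall i, has_partials (Pot i) (gi i))
  (* smooth reference trajectory: D k = k-th derivative of q_d = D 0 *)
  (HD : forall k t a, derivable_pt_lim (fun t' => D k t' a) t (D k.+1 t a))
  (* gains *)
  (HPi : forall i, spd (Pi i))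
  (HK : forall i, spd (Ki i))
  (HKz : spd Kz)
  (* eigenvalue data for k2, k3 *)
  (HlPi : is_lambda_max (bdiag Pi) lPi)
  (HlM : is_lub (fun l => exists q : 'I_N * 'I_n -> R, is_lambda_max (Mstack Mi q) l) lM)
  (HlKz : is_lambda_max Kz lKz)
  (HmPi2 : is_lambda_min (mm (bdiag Pi) (bdiag Pi)) mPi2)
  (HmK : is_lambda_min (bdiag Ki) mK)
  (HmKz2 : is_lambda_min (mm Kz Kz) mKz2) :
  let k2 := Rmax lPi (Rmax lM lKz) in
  let k3 := Rmin mPi2 (Rmin mK mKz2) in
  let beta := k3 / k2 in
  (forall t0 q v vdot vrdot tau z zdot,
     cl_solution B Mi Ci gi Pi Ki Kz zd D t0 q v vdot vrdot tau z zdot ->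
     let S := fun t => Sfun Pi Mi Kz zd (qtil (q t) (D 0%nat t))
                          (svar Pi (q t) (v t) (D 0%nat t) (D 1%nat t)) (z t) (q t) in
     (forall t, t0 < t ->
        let Sd := Sdot_val Pi Ki Kz zd (qtil (q t) (D 0%nat t))
                    (svar Pi (q t) (v t) (D 0%nat t) (D 1%nat t)) (z t) in
        derivable_pt_lim S t Sd /\ Sd <= - beta * S t) /\
     (forall t, t0 <= t -> S t <= exp (- beta * (t - t0)) * S t0))
  /\
  (* global uniform exponential stability of (qtilde, s, zeta) = (0, 0, zeta_d) *)
  (exists c lam, 0 < c /\ 0 < lam /\
     forall t0 q v vdot vrdot tau z zdot,
       cl_solution B Mi Ci gi Pi Ki Kz zd D t0 q v vdot vrdot tau z zdot ->
       let X := fun t => sqrt (sqnorm (qtil (q t) (D 0%nat t))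
                               + sqnorm (svar Pi (q t) (v t) (D 0%nat t) (D 1%nat t))
                               + sqnorm (vsub (z t) zd)) in
       forall t, t0 <= t -> X t <= c * exp (- lam * (t - t0)) * X t0).
Proof.
move=> k2 k3 beta.
have [p0 _] := eig_ne HlPi.1.
have [e0 _] := eig_ne HlKz.1.
have symPi : msym (bdiag Pi) by apply: msym_bdiag => i; exact: (HPi i).1.
have symK : msym (bdiag Ki) by apply: msym_bdiag => i; exact: (HK i).1.
have symKz : msym Kz := HKz.1.
have symM : forall q, msym (Mstack Mi q) by move=> q; apply: msym_bdiag => i; exact: HMsym.
have bPi := lmax_bound symPi HlPi.
have bKz := lmax_bound symKz HlKz.
have bM : forall q x, quad (Mstack Mi q) x <= lM * sqnorm x.
  move=> q x; have [l hl] := lmax_exists p0 (symM q).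
  have hle : l <= lM by apply: HlM.1; exists q.
  have := lmax_bound (symM q) hl x; have := sqnorm_ge0 x; nra.
have bPi2 := lmin_bound (msym_mm symPi) HmPi2.
have bK := lmin_bound symK HmK.
have bKz2 := lmin_bound (msym_mm symKz) HmKz2.
have spdPi := spd_bdiag HPi.
have pPi : 0 < lPi := spd_eig_pos spdPi HlPi.1.
have pPi2 : 0 < mPi2 := spd_eig_pos (spd_mm spdPi) HmPi2.1.
have pK : 0 < mK := spd_eig_pos (spd_bdiag HK) HmK.1.
have pKz2 : 0 < mKz2 := spd_eig_pos (spd_mm HKz) HmKz2.1.
have hk2a : lPi <= k2 := Rmax_l _ _.
have hk2b : lM <= k2 by apply: Rle_trans (Rmax_l lM lKz) (Rmax_r _ _).
have hk2c : lKz <= k2 by apply: Rle_trans (Rmax_r lM lKz) (Rmax_r _ _).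
have hk3a : k3 <= mPi2 := Rmin_l _ _.
have hk3b : k3 <= mK by apply: Rle_trans (Rmin_r _ _) (Rmin_l _ _).
have hk3c : k3 <= mKz2 by apply: Rle_trans (Rmin_r _ _) (Rmin_r _ _).
have k2pos : 0 < k2 by lra.
have k3pos : 0 < k3 by apply: Rmin_pos => //; apply: Rmin_pos.
have bpos : 0 < beta by apply: Rdiv_lt_0_compat.
have bk2 : beta * k2 = k3 by rewrite /beta; field; lra.
clearbody beta k3 k2.
have Sup : forall qt s e q, Sfun Pi Mi Kz zd qt s e q <=
    k2 / 2 * (sqnorm qt + sqnorm s + sqnorm (vsub e zd)).
  move=> qt s e q; rewrite /Sfun /Pzeta.
  have h1 := bPi qt; have h2 := bM q s; have h3 := bKz (vsub e zd).
  have g1 := sqnorm_ge0 qt; have g2 := sqnorm_ge0 s; have g3 := sqnorm_ge0 (vsub e zd).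
  have i1 : lPi * sqnorm qt <= k2 * sqnorm qt by apply: Rmult_le_compat_r.
  have i2 : lM * sqnorm s <= k2 * sqnorm s by apply: Rmult_le_compat_r.
  have i3 : lKz * sqnorm (vsub e zd) <= k2 * sqnorm (vsub e zd) by apply: Rmult_le_compat_r.
  lra.
have P1 : forall t0 q v vdot vrdot tau z zdot,
     cl_solution B Mi Ci gi Pi Ki Kz zd D t0 q v vdot vrdot tau z zdot ->
     let S := fun t => Sfun Pi Mi Kz zd (qtil (q t) (D 0%nat t))
                          (svar Pi (q t) (v t) (D 0%nat t) (D 1%nat t)) (z t) (q t) in
     (forall t, t0 < t ->
        let Sd := Sdot_val Pi Ki Kz zd (qtil (q t) (D 0%nat t))
                    (svar Pi (q t) (v t) (D 0%nat t) (D 1%nat t)) (z t) in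
        derivable_pt_lim S t Sd /\ Sd <= - beta * S t) /\
     (forall t, t0 <= t -> S t <= exp (- beta * (t - t0)) * S t0).
  move=> t0 q v vdot vrdot tau z zdot Hsol S.
  have [rq [rv [rz Hs]]] := Hsol.
  have HD1 : forall t0 t q v vdot vrdot tau z zdot,
       cl_solution B Mi Ci gi Pi Ki Kz zd D t0 q v vdot vrdot tau z zdot -> t0 < t ->
       let S := fun t => Sfun Pi Mi Kz zd (qtil (q t) (D 0%nat t))
                          (svar Pi (q t) (v t) (D 0%nat t) (D 1%nat t)) (z t) (q t) in
       let Sd := Sdot_val Pi Ki Kz zd (qtil (q t) (D 0%nat t))
                    (svar Pi (q t) (v t) (D 0%nat t) (D 1%nat t)) (z t) in
        derivable_pt_lim S t Sd /\ Sd <= - beta * S t.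
    move=> t0' t q' v' vdot' vrdot' tau' z' zdot' Hsol' ht S' Sd.
    have [_ [_ [_ Hs']]] := Hsol'.
    have := Hs' t ht; cbv zeta.
    move=> [hdq [hdv [hdz [hdvr [htau [hdyn hzd]]]]]].
    set qt := qtil (q' t) (D 0%nat t) in htau hdyn hzd Sd *.
    set s := svar Pi (q' t) (v' t) (D 0%nat t) (D 1%nat t) in htau hdyn hzd Sd *.
    set e := vsub (z' t) zd.
    set vr := vref Pi (q' t) (D 0%nat t) (D 1%nat t) in htau.
    pose dqt := fun p : 'I_N * 'I_n => v' t p - D 1%nat t p.2.
    pose ds := fun p : 'I_N * 'I_n => vdot' t p - vrdot' t p.
    pose de := zdot' t.
    pose Mst := Mstack Mi (q' t).
    pose dMst := bdiag (fun i => Mdot (dM i) (blk (q' t) i) (blk (v' t) i)).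
    pose Cb := bdiag (fun i => Ci i (blk (q' t) i) (blk (v' t) i)).
    pose mu := mv (tr (kronI B)) s.
    pose w := mv Kz e.
    pose L := / 2 * (bil (bdiag Pi) dqt qt + quad (fun _ _ => 0) qt + bil (bdiag Pi) qt dqt)
            + / 2 * (bil Mst ds s + quad dMst s + bil Mst s ds)
            + / 2 * (bil Kz de e + quad (fun _ _ => 0) e + bil Kz e de).
    have dS : derivable_pt_lim S' t L.
      rewrite /S' /Sfun /Pzeta /L.
      apply: dplus; [apply: dplus|]; apply: dscal; apply: dquad.
      - move=> p r; exact: dconst.
      - move=> p; exact: dminus (hdq p) (HD 0%nat t p.2).
      - move=> p r; rewrite /dMst /Mstack /bdiag; case: eqP => _; last exact: dconst.
        exact: (chain (HdM p.1 p.2 r.2) (c := fun u => blk (q' u) p.1) (fun k => hdq (p.1, k))).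
      - move=> p; exact: dminus (hdv p) (hdvr p).
      - move=> p r; exact: dconst.
      - move=> p; apply: (dval (dminus (hdz p) (dconst (zd p) t))); rewrite /de; ring.
    have eL : L = Sd.
      have symMst : msym Mst := symM (q' t).
      have X1 : bil (bdiag Pi) qt dqt = bil (bdiag Pi) qt s - quad (mm (bdiag Pi) (bdiag Pi)) qt.
        rewrite /bil /quad /dot -rsum_minus; apply: rsum_ext => p; rewrite mv_mm.
        rewrite (mv_ext (bdiag Pi) dqt (vsub s (mv (bdiag Pi) qt)) p); last first.
          move=> r; rewrite /dqt /vsub /s /svar /vsub /vref -/qt; ring.
        rewrite mv_sub; ring.
      have hpt : forall p, mv Mst ds p = - mv Cb s p - mv (bdiag Ki) s p - mv (bdiag Pi) qt p
                                        + - mv (kronI B) w p.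
        move=> [i a]; rewrite /Mst /Mstack /Cb !mv_bdiag.
        change (blk ds i) with (vsub (blk (vdot' t) i) (blk (vrdot' t) i)).
        rewrite mv_sub.
        have hs : mv (Ci i (blk (q' t) i) (blk (v' t) i)) (blk s i) a =
                  mv (Ci i (blk (q' t) i) (blk (v' t) i)) (blk (v' t) i) a -
                  mv (Ci i (blk (q' t) i) (blk (v' t) i)) (blk vr i) a.
          by rewrite -mv_sub.
        move: (hdyn i a) (htau i a) hs; rewrite /w /e.
        set a1 := mv (Mi i (blk (q' t) i)) (blk (vdot' t) i) a.
        set a2 := mv (Mi i (blk (q' t) i)) (blk (vrdot' t) i) a.
        set a3 := mv (Ci i (blk (q' t) i) (blk (v' t) i)) (blk (v' t) i) a.
        set a4 := mv (Ci i (blk (q' t) i) (blk (v' t) i)) (blk vr i) a.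
        set a5 := mv (Ci i (blk (q' t) i) (blk (v' t) i)) (blk s i) a.
        set a6 := mv (Ki i) (blk s i) a.
        set a7 := mv (Pi i) (blk qt i) a.
        set a8 := mv (kronI B) (mv Kz (vsub (z' t) zd)) (i, a).
        set a9 := gi i (blk (q' t) i) a.
        set a10 := tau' t (i, a).
        lra.
      have X2 : bil Mst s ds = - quad Cb s - quad (bdiag Ki) s - bil (bdiag Pi) s qt
                               + - dot s (mv (kronI B) w).
        rewrite /bil /quad /dot.
        transitivity (rsum (fun p => - (s p * mv Cb s p) - s p * mv (bdiag Ki) s p
                          - s p * mv (bdiag Pi) qt p + - (s p * mv (kronI B) w p))).
          by apply: rsum_ext => p; rewrite hpt; ring.
        by rewrite rsum_plus !rsum_minus !rsum_opp.
      have X3 : quad dMst s = 2 * quad Cb s.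
        have sk : mskew (fun p r => 1 * dMst p r + (-2) * Cb p r).
          move=> p r; rewrite /dMst /Cb /bdiag [r.1 == p.1]eq_sym.
          case: eqP => h; last ring.
          rewrite h; have := HCskew r.1 (blk (q' t) r.1) (blk (v' t) r.1) p.2 r.2.
          move=> /= hs; lra.
        have := quad_skew s sk; rewrite quad_mlin; lra.
      have X4 : bil Kz e de = dot e (mv Kz mu) - quad (mm Kz Kz) e.
        rewrite /bil /quad /dot -rsum_minus; apply: rsum_ext => p; rewrite mv_mm.
        rewrite (mv_ext Kz de (vsub mu (mv Kz e)) p); last first.
          by move=> r; rewrite /de hzd.
        rewrite mv_sub /w; ring.
      have X5 : bil (bdiag Pi) s qt = bil (bdiag Pi) qt s by apply: bil_sym.
      have X6 : - dot s (mv (kronI B) w) + dot e (mv Kz mu) = 0.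
        have : dot e (mv Kz mu) = dot s (mv (kronI B) w).
          change (bil Kz e mu = dot s (mv (kronI B) w)).
          rewrite bil_sym // /bil -/w /mu dot_sym mv_tr dot_sym //.
        lra.
      have S1 : bil (bdiag Pi) dqt qt = bil (bdiag Pi) qt dqt by apply: bil_sym.
      have S2 : bil Mst ds s = bil Mst s ds by apply: bil_sym.
      have S3 : bil Kz de e = bil Kz e de by apply: bil_sym.
      rewrite /L /Sd /Sdot_val -/e !quad_zero S1 S2 S3 X1 X2 X3 X4.
      lra.
    split; first by rewrite -eL.
    have hS : S' t <= k2 / 2 * (sqnorm qt + sqnorm s + sqnorm e) by exact: Sup.
    have h1 := bPi2 qt; have h2 := bK s; have h3 := bKz2 e.
    have g1 := sqnorm_ge0 qt; have g2 := sqnorm_ge0 s; have g3 := sqnorm_ge0 e.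
    have j1 : k3 * sqnorm qt <= mPi2 * sqnorm qt by apply: Rmult_le_compat_r.
    have j2 : k3 * sqnorm s <= mK * sqnorm s by apply: Rmult_le_compat_r.
    have j3 : k3 * sqnorm e <= mKz2 * sqnorm e by apply: Rmult_le_compat_r.
    have hSd : Sd = - quad (mm (bdiag Pi) (bdiag Pi)) qt - quad (bdiag Ki) s - quad (mm Kz Kz) e by [].
    have hb : beta * S' t <= beta * (k2 / 2 * (sqnorm qt + sqnorm s + sqnorm e)).
      exact: Rmult_le_compat_l (Rlt_le _ _ bpos) hS.
    have : beta * (k2 / 2 * (sqnorm qt + sqnorm s + sqnorm e)) = k3 / 2 * (sqnorm qt + sqnorm s + sqnorm e).
      rewrite -bk2; field.
    have := Rmult_le_pos _ _ (Rlt_le _ _ k3pos) g1; have := Rmult_le_pos _ _ (Rlt_le _ _ k3pos) g2.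
    have := Rmult_le_pos _ _ (Rlt_le _ _ k3pos) g3.
    lra.
  have Hd : forall t, t0 < t ->
        let Sd := Sdot_val Pi Ki Kz zd (qtil (q t) (D 0%nat t))
                    (svar Pi (q t) (v t) (D 0%nat t) (D 1%nat t)) (z t) in
        derivable_pt_lim S t Sd /\ Sd <= - beta * S t.
    move=> t ht; exact: (HD1 t0 t q v vdot vrdot tau z zdot Hsol ht).
  split => //.
  apply: (gronwall (Sd := fun t => Sdot_val Pi Ki Kz zd (qtil (q t) (D 0%nat t))
                    (svar Pi (q t) (v t) (D 0%nat t) (D 1%nat t)) (z t))); last exact: Hd.
  rewrite /S /Sfun /Pzeta.
  apply: rc_plus; [apply: rc_plus|]; apply: rc_mul; try exact: rc_const; apply: rc_quad.
  - move=> p r; exact: rc_const.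
  - move=> p; exact: rc_minus (rq p) (rc_deriv (HD 0%nat t0 p.2)).
  - move=> p r; rewrite /Mstack /bdiag; case: eqP => _; last exact: rc_const.
    exact: (rc_comp (HdM p.1 p.2 r.2) (c := fun u => blk (q u) p.1) (fun k => rq (p.1, k))).
  - move=> p; apply: rc_minus (rv p) _; apply: rc_minus (rc_deriv (HD 1%nat t0 p.2)) _.
    apply: rc_rsum => r; apply: rc_mul (rc_const _ _) _.
    exact: rc_minus (rq r) (rc_deriv (HD 0%nat t0 r.2)).
  - move=> p r; exact: rc_const.
  - move=> p; exact: rc_minus (rz p) (rc_const _ _).
split; first exact: P1.
have [cPi [cPi0 lPi']] := spd_lower p0 spdPi.
have [cKz [cKz0 lKz']] := spd_lower e0 HKz.
have Mlow : forall q x, m1 * sqnorm x <= quad (Mstack Mi q) x.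
  move=> q x; rewrite /Mstack quad_bdiag sqnorm_pair -rsum_scal; apply: rsum_le => i.
  exact: (HMbnd i _ _).1.
have m1pos : 0 < m1 by lra.
set r0 := Rmin cPi (Rmin m1 cKz).
have r0pos : 0 < r0 by apply: Rmin_pos => //; apply: Rmin_pos.
have r1 : r0 <= cPi := Rmin_l _ _.
have r2 : r0 <= m1 by apply: Rle_trans (Rmin_r _ _) (Rmin_l _ _).
have r3 : r0 <= cKz by apply: Rle_trans (Rmin_r _ _) (Rmin_r _ _).
clearbody r0.
set a0 := / 2 * r0.
have a0pos : 0 < a0 by rewrite /a0; lra.
have Slow : forall qt s e q, a0 * (sqnorm qt + sqnorm s + sqnorm (vsub e zd)) <= Sfun Pi Mi Kz zd qt s e q.
  move=> qt s e q; rewrite /Sfun /Pzeta /a0.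
  have h1 := lPi' qt; have h2 := Mlow q s; have h3 := lKz' (vsub e zd).
  have g1 := sqnorm_ge0 qt; have g2 := sqnorm_ge0 s; have g3 := sqnorm_ge0 (vsub e zd).
  have i1 : r0 * sqnorm qt <= cPi * sqnorm qt by apply: Rmult_le_compat_r.
  have i2 : r0 * sqnorm s <= m1 * sqnorm s by apply: Rmult_le_compat_r.
  have i3 : r0 * sqnorm (vsub e zd) <= cKz * sqnorm (vsub e zd) by apply: Rmult_le_compat_r.
  lra.
clearbody a0.
have k2a : 0 < k2 / 2 / a0 by apply: Rdiv_lt_0_compat => //; lra.
exists (sqrt (k2 / 2 / a0)), (beta / 2); split; first exact: sqrt_lt_R0.
split; first lra.
move=> t0 q v vdot vrdot tau z zdot Hsol X t ht.
have := P1 t0 q v vdot vrdot tau z zdot Hsol; cbv zeta => -[_ Hexp].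
have hE := Hexp t ht.
rewrite /X.
set Tt := sqnorm (qtil (q t) (D 0%nat t)) + sqnorm (svar Pi (q t) (v t) (D 0%nat t) (D 1%nat t)) + sqnorm (vsub (z t) zd).
set T0 := sqnorm (qtil (q t0) (D 0%nat t0)) + sqnorm (svar Pi (q t0) (v t0) (D 0%nat t0) (D 1%nat t0)) + sqnorm (vsub (z t0) zd).
have hl := Slow (qtil (q t) (D 0%nat t)) (svar Pi (q t) (v t) (D 0%nat t) (D 1%nat t)) (z t) (q t).
have hu := Sup (qtil (q t0) (D 0%nat t0)) (svar Pi (q t0) (v t0) (D 0%nat t0) (D 1%nat t0)) (z t0) (q t0).
rewrite -/Tt in hl; rewrite -/T0 in hu.
set St := Sfun _ _ _ _ _ _ (z t) (q t) in hl hE.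
set S0 := Sfun _ _ _ _ _ _ (z t0) (q t0) in hu hE.
set E := exp (- beta * (t - t0)) in hE.
set E' := exp (- (beta / 2) * (t - t0)).
have EE : E = E' * E'.
  rewrite /E /E' -exp_plus; f_equal; field.
have E'pos : 0 < E' by apply: exp_pos.
have T00 : 0 <= T0 by rewrite /T0; have := sqnorm_ge0 (qtil (q t0) (D 0%nat t0)); have := sqnorm_ge0 (svar Pi (q t0) (v t0) (D 0%nat t0) (D 1%nat t0)); have := sqnorm_ge0 (vsub (z t0) zd); lra.
have hT : Tt <= k2 / 2 / a0 * (E' * E' * T0).
  have h1 : a0 * Tt <= E * (k2 / 2 * T0).
    apply: Rle_trans hl (Rle_trans _ _ _ hE _); apply: Rmult_le_compat_l => //.
    rewrite /E; exact: Rlt_le (exp_pos _).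
  rewrite -EE; apply: (Rmult_le_reg_l a0) => //.
  have -> : a0 * (k2 / 2 / a0 * (E * T0)) = E * (k2 / 2 * T0) by field; lra.
  exact: h1.
apply: Rle_trans (sqrt_le_1_alt _ _ hT) _.
rewrite sqrt_mult_alt; last lra.
rewrite sqrt_mult_alt; last nra.
rewrite sqrt_square; last lra.
apply: Req_le; ring.
Qed.
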